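(* Let $\mathcal S$ be a trajectory set such that for every $S\in\mathcal S$ and every $j\in\mathbb N_0$ the stopped trajectory $(S_{\min\{i,j\}})_{i\in\mathbb N_0}$ belongs to $\mathcal S$. Then (LOP) and (K) hold for $\mathcal S$.
   Context: Fix $s_0\in\mathbb R$. A trajectory set is any set $\mathcal S$ of real sequences $S=(S_j)_{j\in\mathbb N_0}$ with $S_0=s_0$. A simple portfolio $(V,n,H)$ consists of $V\in\mathbb R$, $n\in\mathbb N$ and nonanticipating functions $H_i:\mathcal S\to\mathbb R$, $0\le i\le n-1$ (i.e. $H_i(S)=h_i(S_0,\dots,S_i)$ for some arbitrary $h_i:\mathbb R^{i+1}\to\mathbb R$). Its wealth is $\Pi^{V,n,H}_j(S)=V+\sum_{i=0}^{\min\{j,n\}-1}H_i(S)(S_{i+1}-S_i)$ and $\Pi^{V,n,H}_\infty:=\Pi^{V,n,H}_n$; it is positive if $V\ge0$ and $\Pi^{V,n,H}_\infty\ge0$ on $\mathcal S$. A positive generalized portfolio is a sequence $(V_m,n_m,H_m)_{m\in\mathbb N}$ of positive simple portfolios; it superhedges $f:\mathcal S\to[0,+\infty]$ with initial endowment $\sum_{m\ge1}V_m$ if $f\le\sum_{m=1}^\infty\Pi^{V_m,n_m,H_m}_\infty$ on $\mathcal S$. $\bar I(f)$ is the infimum of initial endowments of positive generalized portfolios superhedging $f$. Let $\mathcal E=\{\Pi^{V,n,H}_\infty\}$ over all simple portfolios. (LOP): whenever two simple portfolios have equal terminal wealth $\Pi_\infty$ at every $S\in\mathcal S$, their initial endowments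 coincide; under (LOP), $I:\mathcal E\to\mathbb R$, $I(\Pi^{V,n,H}_\infty)=V$, is well defined. (K): $I(f)+\bar I(f^-)\le\bar I(f^+)$ for every $f\in\mathcal E$ ($f^\pm$ positive/negative parts). *)

(* Defs.v *)
From HB Require Import structures.
From mathcomp Require Import all_boot all_order all_algebra.
From mathcomp Require Import all_classical all_reals.
From mathcomp Require Import ereal sequences.
Set Implicit Arguments. Unset Strict Implicit. Unset Printing Implicit Defensive.
Import Order.TTheory GRing.Theory Num.Theory.
Local Open Scope ring_scope.
Local Open Scope classical_set_scope.

Section Defs.
Variable R : realType.

Definition traj := nat -> R.

Definition trajectory_set (s0 : R) (SS : set traj) : Prop :=
  forall S, SS S -> S 0%N = s0.

Record simple_portfolio := SimplePortfolio {
  sp_V : R;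
  sp_n : nat;
  sp_H : nat -> traj -> R }.

Definition is_simple_portfolio (p : simple_portfolio) : Prop :=
  (0 < sp_n p)%N /\
  forall i, (i < sp_n p)%N ->
    forall S S' : traj, (forall k, (k <= i)%N -> S k = S' k) ->
      sp_H p i S = sp_H p i S'.

Definition wealth (p : simple_portfolio) (j : nat) (S : traj) : R :=
  sp_V p + \sum_(0 <= i < minn j (sp_n p)) sp_H p i S * (S i.+1 - S i).

Definition wealth_inf (p : simple_portfolio) (S : traj) : R :=
  wealth p (sp_n p) S.

Definition positive_portfolio (SS : set traj) (p : simple_portfolio) : Prop :=
  is_simple_portfolio p /\ 0 <= sp_V p /\
  forall S, SS S -> 0 <= wealth_inf p S.

Definition superhedges (SS : set traj) (P : nat -> simple_portfolio)
  (f : traj -> \bar R) : Prop :=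
  (forall m, positive_portfolio SS (P m)) /\
  forall S, SS S -> (f S <= \sum_(0 <= m <oo) ((wealth_inf (P m) S)%:E))%E.

Definition Ibar (SS : set traj) (f : traj -> \bar R) : \bar R :=
  ereal_inf [set (\sum_(0 <= m <oo) ((sp_V (P m))%:E))%E
            | P in [set P | superhedges SS P f]].

Definition LOP (SS : set traj) : Prop :=
  forall p q, is_simple_portfolio p -> is_simple_portfolio q ->
    (forall S, SS S -> wealth_inf p S = wealth_inf q S) -> sp_V p = sp_V q.

Definition represents (SS : set traj) (p : simple_portfolio) (f : traj -> R) :=
  is_simple_portfolio p /\ forall S, SS S -> f S = wealth_inf p S.

(* condition (K): I(f) + Ibar(f^-) <= Ibar(f^+) for every f in E,
   where I(f) = V for any simple portfolio (V,n,H) representing f *)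
Definition condK (SS : set traj) : Prop :=
  forall (f : traj -> R) (p : simple_portfolio), represents SS p f ->
    ((sp_V p)%:E + Ibar SS (fun S => (Num.max (- f S) 0)%:E)
      <= Ibar SS (fun S => (Num.max (f S) 0)%:E))%E.

End Defs.

(* Main.v *)
Require Import Defs.
From HB Require Import structures.
From mathcomp Require Import all_boot all_order all_algebra.
From mathcomp Require Import all_classical all_reals.
From mathcomp Require Import ereal sequences.
From mathcomp Require Import topology normedtype.
From mathcomp Require Import ring lra.
Set Implicit Arguments. Unset Strict Implicit. Unset Printing Implicit Defensive.
Import Order.TTheory GRing.Theory Num.Theory.
Import numFieldNormedType.Exports.
Local Open Scope ring_scope.
Local Open Scope classical_set_scope.

Section Basic.
Variable R : realType.
Implicit Types (S : traj R) (q : simple_portfolio R).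

Definition hh q i S : R := if (i < sp_n q)%N then sp_H q i S else 0.
Definition stop S j : traj R := fun i => S (minn i j).
Definition agree S S' (i : nat) := forall k, (k <= i)%N -> S k = S' k.

Lemma sum_cond_min (F : nat -> R) a b :
  \sum_(0 <= i < a) (if (i < b)%N then F i else 0) = \sum_(0 <= i < minn a b) F i.
Proof.
case: (leqP a b) => hab.
- apply: eq_big_nat => i /andP[_ hi].
  by rewrite (leq_trans hi hab).
- rewrite (@big_cat_nat _ _ _ b 0 a _ _ (leq0n b) (ltnW hab)) /=.
  rewrite [X in _ + X]big1_seq ?addr0; last first.
    by move=> i /andP[_]; rewrite mem_index_iota => /andP[hi _]; rewrite ltnNge hi.
  by apply: eq_big_nat => i /andP[_ ->].
Qed.

Lemma wealthE q j S :
  wealth q j S = sp_V q + \sum_(0 <= i < j) hh q i S * (S i.+1 - S i).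
Proof.
rewrite /wealth; congr (_ + _).
rewrite -sum_cond_min; apply: eq_bigr => i _; rewrite /hh.
by case: ifP => _ //; rewrite mul0r.
Qed.

Lemma agree_sym S S' i : agree S S' i -> agree S' S i.
Proof. by move=> h k hk; rewrite h. Qed.

Lemma agree_trans S S' S'' i : agree S S' i -> agree S' S'' i -> agree S S'' i.
Proof. by move=> h h' k hk; rewrite h ?h'. Qed.

Lemma agree_le S S' i j : (j <= i)%N -> agree S S' i -> agree S S' j.
Proof. by move=> hji h k hk; apply: h; apply: leq_trans hk hji. Qed.

Lemma agree_stop S j : agree S (stop S j) j.
Proof. by move=> k hk; rewrite /stop (minn_idPl hk). Qed.

Lemma stop_succ S i : stop S i i.+1 = S i.
Proof. by rewrite /stop (minn_idPr (leqnSn i)). Qed.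

Lemma hh_agree q i S S' : is_simple_portfolio q -> agree S S' i -> hh q i S = hh q i S'.
Proof.
move=> [_ hq] h; rewrite /hh; case: ifP => // hi; exact: hq.
Qed.

Lemma wealth_agree q j S S' : is_simple_portfolio q -> agree S S' j ->
  wealth q j S = wealth q j S'.
Proof.
move=> sq h; rewrite !wealthE; congr (_ + _); apply: eq_big_nat => i /andP[_ hi].
rewrite (hh_agree sq (agree_le (ltnW hi) h)) (h i (ltnW hi)) (h i.+1 hi) //.
Qed.

Lemma wealth_stop q j S : is_simple_portfolio q ->
  wealth_inf q (stop S j) = wealth q j S.
Proof.
move=> sq; rewrite /wealth_inf /wealth (minn_idPl (leqnn _)); congr (_ + _).
rewrite minnC -sum_cond_min; apply: eq_big_nat => i /andP[_ hi].
case: ifP => hij.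
- rewrite /stop (minn_idPl (ltnW hij)) (minn_idPl hij).
  congr (_ * _); case: sq => _ hq; apply: hq => // k hk.
  by rewrite /stop (minn_idPl (leq_trans hk (ltnW hij))).
- rewrite /stop; move/negbT: hij; rewrite -leqNgt => hji.
  rewrite (minn_idPr hji) (minn_idPr (leq_trans hji (leqnSn _))).
  by rewrite subrr mulr0.
Qed.

Lemma wealth0 q S : wealth q 0 S = sp_V q.
Proof. by rewrite wealthE big_geq // addr0. Qed.

Lemma wealthS q j S : wealth q j.+1 S = wealth q j S + hh q j S * (S j.+1 - S j).
Proof. by rewrite !wealthE big_nat_recr //= addrA. Qed.

Lemma ser_ge_partial (u : nat -> R) N : (forall m, 0 <= u m) ->
  ((\sum_(0 <= m < N) u m)%:E <= \sum_(0 <= m <oo) (u m)%:E)%E.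
Proof.
move=> u0; rewrite -sumEFin.
by apply: (@nneseries_lim_ge R (fun m => (u m)%:E) xpredT 0 N) => n _ _; rewrite lee_fin.
Qed.

Lemma ser_approx (u : nat -> R) x eta : (forall m, 0 <= u m) -> 0 < eta ->
  (x%:E <= \sum_(0 <= m <oo) (u m)%:E)%E ->
  exists N, x - eta <= \sum_(0 <= m < N) u m.
Proof.
move=> u0 eta0 hx; apply: contrapT => hN.
have : (\sum_(0 <= m <oo) (u m)%:E <= (x - eta)%:E)%E.
  apply: lime_le.
    by apply: is_cvg_nneseries => n _ _; rewrite lee_fin.
  exists 0%N => // n _ /=; rewrite sumEFin lee_fin; apply/ltW.
  by rewrite ltNge; apply/negP => h; apply: hN; exists n.
move=> h; have := le_trans hx h; rewrite lee_fin => hh; lra.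
Qed.

End Basic.

Module P2.

Section Constr.
Variable R : realType.
Variable SS : set (traj R).
Variable p : simple_portfolio R.
Variable P : nat -> simple_portfolio R.
Variable K : nat.
Variable eps : R.

Implicit Types (S : traj R).

Definition n := sp_n p.
Definition Y m j S := wealth (P m) j S.
Definition hm m i S := hh (P m) i S.
Definition Pi j S := wealth p j S.
Definition hp i S := hh p i S.
Definition dS S i := S i.+1 - S i.
Definition Fin j S := exists B, forall N, \sum_(0 <= m < N) Y m j S <= B.
Definition node S i S' := SS S' /\ agree S S' i.
Definition A0 := \sum_(0 <= m < K) sp_V (P m) - sp_V p + eps.

Definition spec i (y h : nat -> R) (Piv hpv : R) (nd : traj R -> Prop)
   (M : nat) (A : R) (d : nat * R) : Prop :=
  (M <= d.1)%N /\ (0 < A + \sum_(M <= m < d.1) y m \/ d.2 = 0) /\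
  forall S', nd S' ->
    0 <= A + \sum_(M <= m < d.1) y m + d.2 * dS S' i /\
    (Fin i.+1 S' -> 0 < A - \sum_(0 <= m < M) y m + Piv +
                        (d.2 - \sum_(0 <= m < d.1) h m + hpv) * dS S' i).

Definition decide S i M A : nat * R :=
  xget (0%N, 0) (spec i (fun m => Y m i S) (fun m => hm m i S) (Pi i S) (hp i S)
                      (node S i) M A).

Fixpoint state i S : nat * R :=
  match i with
  | 0 => (K, A0)
  | i'.+1 => let st := state i' S in let d := decide S i' st.1 st.2 in
      (d.1, st.2 + \sum_(st.1 <= m < d.1) Y m i' S + d.2 * dS S i')
  end.

Definition dec i S := decide S i (state i S).1 (state i S).2.
Definition Aprime i S := (state i S).2 + \sum_((state i S).1 <= m < (dec i S).1) Y m i S.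
Definition kappa i S := (dec i S).2 / Aprime i S.

Fixpoint W m i S : R :=
  match i with
  | 0 => sp_V (P m)
  | i'.+1 => if (m < (dec i' S).1)%N then W m i' S * (1 + kappa i' S * dS S i')
             else W m i' S + hm m i' S * dS S i'
  end.

Fixpoint Ws i S : R :=
  match i with
  | 0 => A0
  | i'.+1 => Ws i' S * (1 + kappa i' S * dS S i')
  end.

Definition HQm m i S := if (m < (dec i S).1)%N then W m i S * kappa i S else hm m i S.
Definition HQs i S := Ws i S * kappa i S.

Definition Q k : simple_portfolio R :=
  match k with
  | 0 => SimplePortfolio A0 n HQs
  | m.+1 => if (m < K)%N then SimplePortfolio 0 n (fun _ _ => 0)
            else SimplePortfolio (sp_V (P m)) n (HQm m)
  end.

Hypothesis Hp : is_simple_portfolio p.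
Hypothesis HPs : forall m, is_simple_portfolio (P m).

Lemma Y_agree m j S S' : agree S S' j -> Y m j S = Y m j S'.
Proof. exact: wealth_agree. Qed.
Lemma hm_agree m j S S' : agree S S' j -> hm m j S = hm m j S'.
Proof. exact: hh_agree. Qed.
Lemma Pi_agree j S S' : agree S S' j -> Pi j S = Pi j S'.
Proof. exact: wealth_agree. Qed.
Lemma hp_agree j S S' : agree S S' j -> hp j S = hp j S'.
Proof. exact: hh_agree. Qed.

Lemma decide_agree S S' i M A : agree S S' i -> decide S i M A = decide S' i M A.
Proof.
move=> h; rewrite /decide.
have -> : (fun m => Y m i S) = (fun m => Y m i S').
  by apply: funext => m; apply: Y_agree.
have -> : (fun m => hm m i S) = (fun m => hm m i S').
  by apply: funext => m; apply: hm_agree.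
rewrite (Pi_agree h) (hp_agree h).
have -> : node S i = node S' i.
  apply: funext => S''; apply: propext; rewrite /node; split => -[h1 h2]; split => //.
    exact: agree_trans (agree_sym h) h2.
  exact: agree_trans h h2.
by [].
Qed.

Lemma state_agree i S S' : agree S S' i -> state i S = state i S'.
Proof.
elim: i => [//|i IH] h /=.
have hi : agree S S' i := agree_le (leqnSn i) h.
rewrite (IH hi) (decide_agree _ _ hi).
have -> : \sum_((state i S').1 <= m < (decide S' i (state i S').1 (state i S').2).1) Y m i S =
          \sum_((state i S').1 <= m < (decide S' i (state i S').1 (state i S').2).1) Y m i S'.
  by apply: eq_bigr => m _; apply: Y_agree.
by rewrite /dS (h i.+1 (leqnn _)) (h i (leqnSn _)).
Qed.

Lemma dec_agree i S S' : agree S S' i -> dec i S = dec i S'.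
Proof. by move=> h; rewrite /dec (state_agree h) (decide_agree _ _ h). Qed.

Lemma kappa_agree i S S' : agree S S' i -> kappa i S = kappa i S'.
Proof.
move=> h; rewrite /kappa /Aprime (dec_agree h) (state_agree h); congr (_ / (_ + _)).
by apply: eq_bigr => m _; apply: Y_agree.
Qed.

Lemma W_agree m i S S' : agree S S' i -> W m i S = W m i S'.
Proof.
elim: i => [//|i IH] h /=.
have hi : agree S S' i := agree_le (leqnSn i) h.
rewrite (IH hi) (dec_agree hi) (kappa_agree hi) (hm_agree _ hi).
by rewrite /dS (h i.+1 (leqnn _)) (h i (leqnSn _)).
Qed.

Lemma Ws_agree i S S' : agree S S' i -> Ws i S = Ws i S'.
Proof.
elim: i => [//|i IH] h /=.
have hi : agree S S' i := agree_le (leqnSn i) h.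
by rewrite (IH hi) (kappa_agree hi) /dS (h i.+1 (leqnn _)) (h i (leqnSn _)).
Qed.

Lemma Q_simple k : is_simple_portfolio (Q k).
Proof.
have n0 : (0 < n)%N by case: Hp.
case: k => [|m] /=.
  split => // i _ S S' h /=; rewrite /HQs (Ws_agree h) (kappa_agree h) //.
case: ifP => _; split => // i _ S S' h /=.
have h' : agree S S' i by move=> k hk; exact: h.
by rewrite /HQm (dec_agree h') (W_agree _ h') (kappa_agree h') (hm_agree _ h').
Qed.

Lemma wealth_Q0 i S : (i <= n)%N -> wealth (Q 0) i S = Ws i S.
Proof.
elim: i => [|i IH] hi; first by rewrite wealth0.
rewrite wealthS IH ?(ltnW hi) // /hh /= hi /HQs /dS; ring.
Qed.

Lemma Q_ge m : (K <= m)%N -> Q m.+1 = SimplePortfolio (sp_V (P m)) n (HQm m).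
Proof. by move=> Km; rewrite /Q; case: ifP => //; rewrite ltnNge Km. Qed.

Lemma Q_lt m : (m < K)%N -> Q m.+1 = SimplePortfolio 0 n (fun _ _ => 0).
Proof. by move=> mK; rewrite /Q mK. Qed.

Lemma wealth_Qm m i S : (K <= m)%N -> (i <= n)%N -> wealth (Q m.+1) i S = W m i S.
Proof.
move=> Km; rewrite (Q_ge Km); elim: i => [|i IH] hi.
  by rewrite wealth0.
rewrite wealthS IH ?(ltnW hi) // /hh /= hi /HQm /dS.
case: ifP => _; ring.
Qed.

Lemma wealth_Qlt m i S : (m < K)%N -> wealth (Q m.+1) i S = 0.
Proof.
move=> mK; rewrite (Q_lt mK) wealthE /= big1 ?addr0 // => j _.
by rewrite /hh /=; case: ifP => _; rewrite mul0r.
Qed.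

End Constr.

End P2.
Import P2.


Section Generic.
Variable R : realType.

Lemma psum_ge0 (u : nat -> R) a b : (forall m, 0 <= u m) -> 0 <= \sum_(a <= m < b) u m.
Proof. by move=> u0; apply: sumr_ge0 => m _. Qed.

Lemma psum_split (u : nat -> R) a b c : (a <= b)%N -> (b <= c)%N ->
  \sum_(a <= m < c) u m = \sum_(a <= m < b) u m + \sum_(b <= m < c) u m.
Proof. by move=> hab hbc; rewrite (@big_cat_nat _ _ _ b). Qed.

Lemma psum_mono (u : nat -> R) a b : (forall m, 0 <= u m) -> (a <= b)%N ->
  \sum_(0 <= m < a) u m <= \sum_(0 <= m < b) u m.
Proof.
move=> u0 hab; rewrite (psum_split u (leq0n a) hab) lerDl; exact: psum_ge0.
Qed.

Lemma psum_sub_le (u : nat -> R) a b : (forall m, 0 <= u m) ->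
  \sum_(a <= m < b) u m <= \sum_(0 <= m < b) u m.
Proof.
move=> u0; case: (leqP a b) => hab.
  by rewrite (psum_split u (leq0n a) hab) lerDr; exact: psum_ge0.
by rewrite big_geq ?(ltnW hab) //; exact: psum_ge0.
Qed.

Lemma tail_small (u : nat -> R) B d M : (forall m, 0 <= u m) ->
  (forall N, \sum_(0 <= m < N) u m <= B) -> 0 < d ->
  exists M', (M <= M')%N /\ forall N, \sum_(M' <= m < N) u m <= d.
Proof.
move=> u0 hB d0.
set E := range (fun N => \sum_(0 <= m < N) u m).
have hs : has_sup E.
  split; first by exists (\sum_(0 <= m < 0) u m), 0%N.
  by exists B => _ [N _ <-].
have [_ [q _ <-] hq] := sup_adherent d0 hs.
exists (maxn M q); split; first exact: leq_maxl.
move=> N; case: (leqP N (maxn M q)) => hN.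
  by rewrite big_geq // ltW.
have := psum_split u (leq0n (maxn M q)) (ltnW hN).
have := psum_mono u0 (leq_maxr M q).
have : \sum_(0 <= m < N) u m <= sup E.
  by apply: sup_upper_bound => //; exists N.
lra.
Qed.

Lemma unbounded_sum (u : nat -> R) : ~ (exists B, forall N, \sum_(0 <= m < N) u m <= B) ->
  forall B, exists N, B < \sum_(0 <= m < N) u m.
Proof.
move=> h B; apply: contrapT => hN; apply: h; exists B => N.
by rewrite leNgt; apply/negP => hl; apply: hN; exists N.
Qed.

Lemma lin_bound (sy c a1 a2 s1 s2 B1 B2 : R) : c != 0 ->
  sy * c = a1 * s1 + a2 * s2 -> `|s1| <= B1 -> `|s2| <= B2 ->
  sy <= (`|a1| * B1 + `|a2| * B2) / `|c|.
Proof.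
move=> c0 he h1 h2.
have cp : 0 < `|c| by rewrite normr_gt0.
rewrite ler_pdivlMr //.
apply: (@le_trans _ _ `|sy * c|).
  by rewrite normrM ler_wpM2r ?ler_norm.
rewrite he; apply: (le_trans (ler_normD _ _)); rewrite !normrM.
apply: lerD; apply: ler_wpM2l => //.
Qed.

End Generic.

Section Exist.
Variable R : realType.
Variable SS : set (traj R).
Variable p : simple_portfolio R.
Variable P : nat -> simple_portfolio R.

Hypothesis HstopSS : forall S, SS S -> forall j, SS (stop S j).
Hypothesis Hp : is_simple_portfolio p.
Hypothesis HPpos : forall m, positive_portfolio SS (P m).
Hypothesis Hdom : forall S, SS S ->
  ((Num.max (wealth_inf p S) 0)%:E <= \sum_(0 <= m <oo) (wealth_inf (P m) S)%:E)%E.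

Local Notation Y := (@Y R P).
Local Notation hm := (@hm R P).
Local Notation Pi := (@Pi R p).
Local Notation hp := (@hp R p).
Local Notation Fin := (@Fin R P).
Local Notation node := (@node R SS).
Local Notation spec := (@spec R P).
Implicit Types (S : traj R).

Lemma HPs m : is_simple_portfolio (P m).
Proof. by case: (HPpos m). Qed.

Lemma Y_ge0 m j S : SS S -> 0 <= Y m j S.
Proof.
move=> hS; rewrite /P2.Y -wealth_stop; last exact: HPs.
by case: (HPpos m) => _ [_]; apply; apply: HstopSS.
Qed.

Lemma dom j S eta : SS S -> 0 < eta ->
  exists N, Pi j S - eta <= \sum_(0 <= m < N) Y m j S.
Proof.
move=> hS e0.
have := Hdom (HstopSS hS j); rewrite wealth_stop //.
move=> /(ser_approx _ e0) [].
  by move=> m; case: (HPpos m) => _ [_]; apply; exact: HstopSS.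
move=> N hN; exists N.
have -> : \sum_(0 <= m < N) Y m j S = \sum_(0 <= m < N) wealth_inf (P m) (stop S j).
  by apply: eq_bigr => m _; rewrite (wealth_stop _ _ (HPs m)).
apply: le_trans hN.
by rewrite lerD2r /P2.Pi le_max lexx.
Qed.

Lemma node_Y m i S S' : node S i S' -> Y m i.+1 S' = Y m i S + hm m i S * dS S' i.
Proof.
move=> [_ h]; rewrite /P2.Y wealthS (wealth_agree (HPs m) (agree_sym h)).
by rewrite (hh_agree (HPs m) (agree_sym h)).
Qed.

Lemma node_Pi i S S' : node S i S' -> Pi i.+1 S' = Pi i S + hp i S * dS S' i.
Proof.
move=> [_ h]; rewrite /P2.Pi wealthS (wealth_agree Hp (agree_sym h)).
by rewrite (hh_agree Hp (agree_sym h)).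
Qed.

Lemma node_stop S i : SS S -> node S i (stop S i).
Proof. by move=> hS; split; [apply: HstopSS | apply: agree_stop]. Qed.

Lemma dS_stop S i : dS (stop S i) i = 0.
Proof. by rewrite /dS stop_succ /stop minnn subrr. Qed.

Lemma sumY_node S i S' a b : node S i S' ->
  \sum_(a <= m < b) Y m i.+1 S' =
  \sum_(a <= m < b) Y m i S + (\sum_(a <= m < b) hm m i S) * dS S' i.
Proof.
move=> nd; rewrite mulr_suml -big_split /=; apply: eq_bigr => m _.
exact: node_Y.
Qed.

End Exist.


Lemma psum_from_mono (R : realType) (u : nat -> R) a x y : (forall m, 0 <= u m) -> (x <= y)%N ->
  \sum_(a <= m < x) u m <= \sum_(a <= m < y) u m.
Proof.
move=> u0 hxy; case: (leqP x a) => hx.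
  by rewrite big_geq //; exact: psum_ge0.
rewrite (psum_split u (ltnW hx) hxy) lerDl; exact: psum_ge0.
Qed.

Lemma nnorm_le (R : realType) (x : R) : - `|x| <= x.
Proof. by rewrite lerNl -normrN ler_norm. Qed.

Section Exist2.
Variable R : realType.
Variable SS : set (traj R).
Variable p : simple_portfolio R.
Variable P : nat -> simple_portfolio R.

Hypothesis HstopSS : forall S, SS S -> forall j, SS (stop S j).
Hypothesis Hp : is_simple_portfolio p.
Hypothesis HPpos : forall m, positive_portfolio SS (P m).
Hypothesis Hdom : forall S, SS S ->
  ((Num.max (wealth_inf p S) 0)%:E <= \sum_(0 <= m <oo) (wealth_inf (P m) S)%:E)%E.

Local Notation Y := (@Y R P).
Local Notation hm := (@hm R P).
Local Notation Pi := (@Pi R p).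
Local Notation hp := (@hp R p).
Local Notation Fin := (@Fin R P).
Local Notation node := (@node R SS).
Local Notation spec := (@spec R P).
Implicit Types (S : traj R).

Lemma sYn S0 i S' a b : node S0 i S' ->
  \sum_(a <= m < b) Y m i.+1 S' =
  \sum_(a <= m < b) Y m i S0 + (\sum_(a <= m < b) hm m i S0) * dS S' i.
Proof. exact: (@sumY_node R SS P HPpos S0 i S' a b). Qed.

Lemma nPi i S0 S' : node S0 i S' -> Pi i.+1 S' = Pi i S0 + hp i S0 * dS S' i.
Proof. exact: (@node_Pi R SS p Hp i S0 S'). Qed.

Lemma dm j S eta : SS S -> 0 < eta -> exists N, Pi j S - eta <= \sum_(0 <= m < N) Y m j S.
Proof. exact: (@dom R SS p P HstopSS Hp HPpos Hdom j S eta). Qed.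

Lemma Yg m j S : SS S -> 0 <= Y m j S.
Proof. exact: (@Y_ge0 R SS P HstopSS HPpos m j S). Qed.

Lemma spec_exists S i M A : SS S -> 0 <= A ->
  (Fin i S -> 0 < A - \sum_(0 <= m < M) Y m i S + Pi i S) ->
  exists d, spec i (fun m => Y m i S) (fun m => hm m i S) (Pi i S) (hp i S) (node S i) M A d.
Proof.
move=> hS hA hD.
have [D eD] : {D | D = A - \sum_(0 <= m < M) Y m i S + Pi i S} by eexists.
rewrite -eD in hD.
have y0 : forall m, 0 <= Y m i S := fun m => Yg m i hS.
have Y0' : forall S' m, node S i S' -> 0 <= Y m i.+1 S'.
  by move=> S' m [h _]; exact: Yg.
have nst : node S i (stop S i) := node_stop HstopSS i hS.
have [hA'|hB] := pselect (forall S', node S i S' -> Fin i.+1 S').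
-
  have FiS : Fin i S.
    have [B hB] := hA' _ nst; exists B => N; have := hB N.
    by rewrite (sYn _ _ nst) dS_stop mulr0 addr0.
  have D0 := hD FiS.
  have [By hBy] := FiS.
  have D4 : 0 < D / 4 by apply: divr_gt0.
  have [M' [hMM' tl]] := tail_small M y0 hBy D4.
  set Gam := limn (fun N => \sum_(M' <= m < N) hm m i S).
  have key : forall S', node S i S' ->
      D / 4 <= D + Gam * dS S' i + \sum_(0 <= m < M') Y m i.+1 S' - Pi i.+1 S' /\
      0 < D + Gam * dS S' i.
    move=> S' nS'.
    have [t0|t0] := eqVneq (dS S' i) 0.
    + rewrite (sYn _ _ nS') (nPi nS') t0 !mulr0 !addr0.
      split; last by [].
      have [N hN] := dm i hS (divr_gt0 D0 (ltr0Sn _ 1)).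
      have := psum_mono y0 (leq_maxl N M').
      have := psum_split (fun m => Y m i S) (leq0n M') (leq_maxr N M').
      have := tl (maxn N M').
      lra.
    + set t := dS S' i.
      set a := fun N => \sum_(M' <= m < N) Y m i.+1 S'.
      set b := fun N => \sum_(M' <= m < N) Y m i S.
      set beta := fun N => \sum_(M' <= m < N) hm m i S.
      have eqb : forall N, beta N * t = a N - b N.
        by move=> N; rewrite /a (sYn _ _ nS') /b /beta -/t; ring.
      have [B' hB'] := hA' S' nS'.
      have amono : {homo a : x y / (x <= y)%N >-> x <= y}.
        by move=> x z hxz; apply: psum_from_mono => // m; exact: Y0'.
      have bmono : {homo b : x y / (x <= y)%N >-> x <= y}.
        by move=> x z hxz; apply: psum_from_mono.
      have ca : cvgn a.
        apply: nondecreasing_is_cvgn => //; exists B' => _ [N _ <-].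
        apply: le_trans (hB' N); apply: psum_sub_le => m; exact: Y0'.
      have cb : cvgn b.
        apply: nondecreasing_is_cvgn => //; exists By => _ [N _ <-].
        by apply: le_trans (hBy N); apply: psum_sub_le.
      have ebt : (fun N => beta N * t) = a - b.
        by apply: funext => N /=; rewrite eqb.
      have cbt : cvgn (fun N => beta N * t) by rewrite ebt; exact: is_cvgB.
      have cbeta : cvgn beta.
        have -> : beta = (fun N => beta N * t) \* cst t^-1.
          by apply: funext => N /=; rewrite mulfK.
        apply: is_cvgM => //; exact: is_cvg_cst.
      have limbt : limn (fun N => beta N * t) = Gam * t.
        have -> : (fun N => beta N * t) = beta \* cst t by [].
        by rewrite limM //; [rewrite lim_cst | exact: is_cvg_cst].
      have Gge : forall N0, a N0 - D / 4 <= Gam * t.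
        move=> N0; rewrite -limbt; apply: limr_ge => //.
        exists N0 => // N /= hN; rewrite eqb.
        have := amono _ _ hN; have := tl N; rewrite -/(b N); lra.
      split.
      * have [N hN] := dm i.+1 (proj1 nS') D4.
        have := psum_mono (fun m => Y0' S' m nS') (leq_maxl N M').
        have := psum_split (fun m => Y m i.+1 S') (leq0n M') (leq_maxr N M').
        have := Gge (maxn N M'); rewrite /a.
        lra.
      * have := Gge M'; rewrite /a big_geq //; lra.
  have eqA' : A + \sum_(M <= m < M') Y m i S = D + \sum_(0 <= m < M') Y m i S - Pi i S.
    by rewrite eD (psum_split _ (leq0n M) hMM'); ring.
  exists (M', Gam + \sum_(0 <= m < M') hm m i S - hp i S).
  rewrite /spec -eD; split => //=; split.
    left; have [k1 _] := key _ nst.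
    move: k1; rewrite (sYn _ _ nst) (nPi nst) dS_stop.
    rewrite eqA'; lra.
  move=> S' nS'; have [k1 k2] := key S' nS'; split.
    move: k1; rewrite (sYn _ _ nS') (nPi nS') eqA'; lra.
  by move=> _; move: k2; lra.
-
  have [S'' [nS'' nF'']] : exists S'', node S i S'' /\ ~ Fin i.+1 S''.
    by move/existsNP: hB => [S'' /not_implyP [h1 h2]]; exists S''.
  suff [M' [hMM' hM']] : exists M', (M <= M')%N /\ forall S', node S i S' -> Fin i.+1 S' ->
      0 < D + (0 - \sum_(0 <= m < M') hm m i S + hp i S) * dS S' i.
    exists (M', 0); rewrite /spec -eD; split => //; split; first by right.
    move=> S' nS'; split; last exact: hM'.
    by rewrite /= mul0r addr0; apply: addr_ge0 => //; exact: psum_ge0.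
  have [FiS|nFiS] := pselect (Fin i S).
  + exists M; split => // S' nS' FS'.
    have [t0|t0] := eqVneq (dS S' i) 0.
      by rewrite t0 mulr0 addr0; exact: hD FiS.
    exfalso; apply: nF''; have [By hBy] := FiS; have [B' hB'] := FS'.
    exists ((`|dS S' i - dS S'' i| * By + `|dS S'' i| * B') / `|dS S' i|) => N.
    apply: (@lin_bound _ _ (dS S' i) (dS S' i - dS S'' i) (dS S'' i)
              (\sum_(0 <= m < N) Y m i S) (\sum_(0 <= m < N) Y m i.+1 S')) => //.
    * by rewrite (sYn _ _ nS'') (sYn _ _ nS'); ring.
    * by rewrite ger0_norm; [exact: hBy | exact: psum_ge0].
    * rewrite ger0_norm; first exact: hB'.
      by apply: psum_ge0 => m; exact: Y0'.
  + have [[Ss [nSs FSs]]|nex] := pselect (exists Ss, node S i Ss /\ Fin i.+1 Ss); last first.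
      by exists M; split => // S' nS' FS'; exfalso; apply: nex; exists S'.
    set ts := dS Ss i.
    have ts0 : ts != 0.
      apply/eqP => ts0; apply: nFiS; have [B0 hB0] := FSs; exists B0 => N; have := hB0 N.
      by rewrite (sYn _ _ nSs) -/ts ts0 mulr0 addr0.
    have [Bs hBs] := FSs.
    have [N hN] := unbounded_sum nFiS (Bs + `|hp i S * ts| + `|D| + 1).
    exists (maxn N M); split; first exact: leq_maxr.
    move=> S' nS' FS'.
    have tt : dS S' i = ts.
      apply: contrapT => hne; apply: nFiS; have [B' hB'] := FS'.
      exists ((`|ts| * B' + `|- dS S' i| * Bs) / `|ts - dS S' i|) => N0.
      apply: (@lin_bound _ _ (ts - dS S' i) ts (- dS S' i)
              (\sum_(0 <= m < N0) Y m i.+1 S') (\sum_(0 <= m < N0) Y m i.+1 Ss)).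
      * by rewrite subr_eq0; apply/eqP => h; apply: hne.
      * by rewrite (sYn _ _ nSs) (sYn _ _ nS') -/ts; ring.
      * rewrite ger0_norm; first exact: hB'.
        by apply: psum_ge0 => m; exact: Y0'.
      * rewrite ger0_norm; first exact: hBs.
        by apply: psum_ge0 => m; exact: Y0'.
    rewrite tt.
    have e1 : (\sum_(0 <= m < maxn N M) hm m i S) * ts =
              \sum_(0 <= m < maxn N M) Y m i.+1 Ss - \sum_(0 <= m < maxn N M) Y m i S.
      by rewrite (sYn _ _ nSs) -/ts; ring.
    have := hBs (maxn N M); have := psum_mono y0 (leq_maxl N M).
    have := nnorm_le (hp i S * ts); have := nnorm_le D.
    lra.
Qed.

End Exist2.


Section Final.
Variable R : realType.
Variable SS : set (traj R).
Variable p : simple_portfolio R.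
Variable P : nat -> simple_portfolio R.
Variable K : nat.
Variable eps : R.

Hypothesis HstopSS : forall S, SS S -> forall j, SS (stop S j).
Hypothesis Hp : is_simple_portfolio p.
Hypothesis HPpos : forall m, positive_portfolio SS (P m).
Hypothesis Hdom : forall S, SS S ->
  ((Num.max (wealth_inf p S) 0)%:E <= \sum_(0 <= m <oo) (wealth_inf (P m) S)%:E)%E.
Hypothesis Heps : 0 < eps.
Hypothesis HA0 : 0 <= A0 p P K eps.

Local Notation Y := (@Y R P).
Local Notation hm := (@hm R P).
Local Notation Pi := (@Pi R p).
Local Notation hp := (@hp R p).
Local Notation Fin := (@Fin R P).
Local Notation node := (@node R SS).
Local Notation spec := (@spec R P).
Local Notation state := (@state R SS p P K eps).
Local Notation dec := (@dec R SS p P K eps).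
Local Notation kappa := (@kappa R SS p P K eps).
Local Notation W := (@W R SS p P K eps).
Local Notation Ws := (@Ws R SS p P K eps).
Local Notation Q := (@Q R SS p P K eps).
Local Notation A0 := (@A0 R p P K eps).
Implicit Types (S : traj R).

Lemma HPs' m : is_simple_portfolio (P m).
Proof. by case: (HPpos m). Qed.

Definition Inv i S :=
  (K <= (state i S).1)%N /\ 0 <= (state i S).2 /\
  (Fin i S -> 0 < (state i S).2 - \sum_(0 <= m < (state i S).1) Y m i S + Pi i S) /\
  (state i S).2 = Ws i S + \sum_(K <= m < (state i S).1) W m i S /\
  (forall m, ((state i S).1 <= m)%N -> W m i S = Y m i S) /\
  0 <= Ws i S /\ (forall m, (K <= m)%N -> 0 <= W m i S).

Lemma Yg' m j S : SS S -> 0 <= Y m j S.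
Proof. exact: (@Y_ge0 R SS P HstopSS HPpos m j S). Qed.

Lemma dec_spec i S : SS S -> Inv i S ->
  spec i (fun m => Y m i S) (fun m => hm m i S) (Pi i S) (hp i S) (node S i)
       (state i S).1 (state i S).2 (dec i S).
Proof.
move=> hS [_ [hA [hD _]]]; rewrite /P2.dec /decide; apply: xgetPex.
exact: (@spec_exists R SS p P HstopSS Hp HPpos Hdom S i _ _ hS hA hD).
Qed.

Lemma Inv_all i S : SS S -> Inv i S.
Proof.
move=> hS; elim: i => [|i IH].
  rewrite /Inv /=; split => //; split => //; split.
    move=> _; rewrite /P2.A0.
    have -> : \sum_(0 <= m < K) Y m 0 S = \sum_(0 <= m < K) sp_V (P m).
      by apply: eq_bigr => m _; rewrite /P2.Y wealth0.
    by rewrite /P2.Pi wealth0; move: Heps; lra.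
  split; first by rewrite big_geq // addr0.
  split; first by move=> m _; rewrite /P2.Y wealth0.
  split => // m _; by case: (HPpos m) => _ [].
have sp := dec_spec hS IH.
case: IH => hK [hA [hD [hId [hUn [hWs hW]]]]].
case: sp => hMM' [hpos hall].
have nSS : node S i S by split => // k.
have [h1 h2] := hall S nSS.
set M := (state i S).1 in hK hA hD hId hUn hMM' hpos h1 h2 *.
set A := (state i S).2 in hK hA hD hId hUn hMM' hpos h1 h2 *.
set M' := (dec i S).1 in hMM' hpos h1 h2 *.
set G := (dec i S).2 in hpos h1 h2 *.
set t := dS S i in h1 h2 *.
have eA : Aprime SS p P K eps i S = A + \sum_(M <= m < M') Y m i S by [].
have ek : kappa i S = G / (A + \sum_(M <= m < M') Y m i S) by [].
set A' := A + \sum_(M <= m < M') Y m i S in eA ek hpos h1 h2.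
have fac : A' * (1 + kappa i S * t) = A' + G * t.
  rewrite ek; case: hpos => [hA'|->].
    by field; rewrite gt_eqF.
  by rewrite !mul0r !addr0 mulr1.
have fac0 : 0 <= 1 + kappa i S * t.
  rewrite ek; case: hpos => [hA'|->]; last by rewrite mul0r mul0r addr0.
  have -> : 1 + G / A' * t = (A' + G * t) / A' by field; rewrite gt_eqF.
  by apply: divr_ge0 => //; apply: ltW.
have est : state i.+1 S = (M', A' + G * t) by [].
have eWs : Ws i.+1 S = Ws i S * (1 + kappa i S * t) by [].
have eW : forall m, W m i.+1 S =
    if (m < M')%N then W m i S * (1 + kappa i S * t) else W m i S + hm m i S * t by [].
have hK' : (K <= M')%N := leq_trans hK hMM'.
rewrite /Inv est; cbn [fst snd].
split => //; split => //; split.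
  move=> hF; have := h2 hF.
  rewrite (@sYn R SS P HPpos S i S 0 M' nSS) (@nPi R SS p Hp i S S nSS) -/t.
  rewrite (psum_split (fun m => Y m i S) (leq0n M) hMM') /A'; lra.
split.
  rewrite -fac eWs /A' hId.
  rewrite (psum_split (fun m => W m i.+1 S) hK hMM').
  have -> : \sum_(K <= m < M) W m i.+1 S = (\sum_(K <= m < M) W m i S) * (1 + kappa i S * t).
    rewrite mulr_suml; apply: eq_big_nat => m /andP[_ hmM]; rewrite eW.
    by rewrite (leq_trans hmM hMM').
  have -> : \sum_(M <= m < M') W m i.+1 S = (\sum_(M <= m < M') Y m i S) * (1 + kappa i S * t).
    rewrite mulr_suml; apply: eq_big_nat => m /andP[h1m h2m]; rewrite eW h2m hUn //.
  ring.
split.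
  move=> m hMm; rewrite eW ltnNge hMm /= hUn ?(leq_trans hMM' hMm) //.
  by rewrite /P2.Y wealthS.
split; first by rewrite eWs; apply: mulr_ge0.
move=> m hKm; rewrite eW; case: ifP => hmM.
  by apply: mulr_ge0 => //; apply: hW.
move/negbT: hmM; rewrite -leqNgt => hmM.
rewrite hUn ?(leq_trans hMM' hmM) //.
have -> : Y m i S + hm m i S * t = Y m i.+1 S by rewrite /P2.Y wealthS.
exact: Yg'.
Qed.


Lemma Q_n k : sp_n (Q k) = n p.
Proof. by case: k => [|m] //=; case: ifP. Qed.

Lemma Q_pos k : positive_portfolio SS (Q k).
Proof.
split; first exact: (@Q_simple R SS p P K eps Hp HPs' k).
split.
  case: k => [|m] /=; first exact: HA0.
  by case: ifP => _ //=; case: (HPpos m) => _ [].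
move=> S hS; rewrite /wealth_inf Q_n.
have [_ [_ [_ [_ [_ [hWs hW]]]]]] := Inv_all (n p) hS.
case: k => [|m]; first by rewrite (@wealth_Q0 R SS p P K eps).
case: (ltnP m K) => hmK; first by rewrite (@wealth_Qlt R SS p P K eps).
by rewrite (@wealth_Qm R SS p P K eps) //; apply: hW.
Qed.

Lemma Q_hedge S : SS S ->
  ((Num.max (- wealth_inf p S) 0)%:E <= \sum_(0 <= k <oo) (wealth_inf (Q k) S)%:E)%E.
Proof.
move=> hS.
have q0 : forall k, 0 <= wealth_inf (Q k) S.
  by move=> k; case: (Q_pos k) => _ [_]; apply.
have wq0 : wealth_inf (Q 0) S = Ws (n p) S.
  by rewrite /wealth_inf Q_n (@wealth_Q0 R SS p P K eps).
have wqm : forall m, wealth_inf (Q m.+1) S = if (m < K)%N then 0 else W m (n p) S.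
  move=> m; rewrite /wealth_inf Q_n; case: ifP => hmK.
    by rewrite (@wealth_Qlt R SS p P K eps).
  by rewrite (@wealth_Qm R SS p P K eps) // leqNgt hmK.
have [hK [hA [hD [hId [hUn _]]]]] := Inv_all (n p) hS.
set M := (state (n p) S).1 in hK hA hD hId hUn.
set A := (state (n p) S).2 in hK hA hD hId hUn.
have ePi : wealth_inf p S = Pi (n p) S by [].
rewrite ePi.
have hps : forall N, (M <= N)%N ->
    \sum_(0 <= k < N.+1) wealth_inf (Q k) S = A + \sum_(M <= m < N) Y m (n p) S.
  move=> N hMN; rewrite big_nat_recl // wq0.
  have -> : \sum_(0 <= m < N) wealth_inf (Q m.+1) S = \sum_(K <= m < N) W m (n p) S.
    rewrite (psum_split _ (leq0n K) (leq_trans hK hMN)) big1_seq ?add0r.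
      apply: eq_big_nat => m /andP[hKm _]; rewrite wqm ltnNge hKm //.
    move=> m /andP[_]; rewrite mem_index_iota => /andP[_ hmK]; by rewrite wqm hmK.
  rewrite (psum_split _ hK hMN) hId addrA; congr (_ + _).
  by apply: eq_big_nat => m /andP[hMm _]; apply: hUn.
have y0 : forall m, 0 <= Y m (n p) S := fun m => Yg' m (n p) hS.
have [hF|nF] := pselect (Fin (n p) S).
  apply: le_trans (ser_ge_partial M.+1 q0).
  rewrite hps // big_geq // addr0 lee_fin ge_max; apply/andP; split => //.
  have := hD hF; have := psum_ge0 0 M y0; lra.
have [N0 hN0] := unbounded_sum nF (\sum_(0 <= m < M) Y m (n p) S + Num.max (- Pi (n p) S) 0).
apply: le_trans (ser_ge_partial (maxn N0 M).+1 q0).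
rewrite hps ?leq_maxr // lee_fin.
have := psum_mono y0 (leq_maxl N0 M).
have := psum_split (fun m => Y m (n p) S) (leq0n M) (leq_maxr N0 M).
lra.
Qed.

Lemma Q_cost (c : R) : (\sum_(0 <= m <oo) (sp_V (P m))%:E = c%:E)%E ->
  (\sum_(0 <= k <oo) (sp_V (Q k))%:E <= (c - sp_V p + eps)%:E)%E.
Proof.
move=> hc.
have v0 : forall m, 0 <= sp_V (P m) by move=> m; case: (HPpos m) => _ [].
have vq0 : forall k, 0 <= sp_V (Q k) by move=> k; case: (Q_pos k) => _ [].
have vq : forall m, sp_V (Q m.+1) = if (m < K)%N then 0 else sp_V (P m).
  by move=> m /=; case: ifP.
have pc : forall N, \sum_(0 <= m < N) sp_V (P m) <= c.
  by move=> N; have := ser_ge_partial N v0; rewrite hc lee_fin.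
have hA0 := HA0; rewrite /P2.A0 in hA0.
apply: lime_le.
  by apply: is_cvg_nneseries => k _ _; rewrite lee_fin.
exists 0%N => // N _ /=; rewrite sumEFin lee_fin.
case: N => [|N].
  by rewrite big_geq //; have := pc K; lra.
rewrite big_nat_recl //=.
have -> : \sum_(0 <= m < N) sp_V (Q m.+1) = \sum_(0 <= m < N) (if (m < K)%N then 0 else sp_V (P m)).
  by apply: eq_bigr => m _; rewrite vq.
have h1 : \sum_(0 <= m < N) (if (m < K)%N then 0 else sp_V (P m)) <=
          \sum_(0 <= m < maxn N K) (if (m < K)%N then 0 else sp_V (P m)).
  by apply: psum_mono (leq_maxl N K) => m; case: ifP.
have h2 : \sum_(0 <= m < maxn N K) (if (m < K)%N then 0 else sp_V (P m)) =
          \sum_(0 <= m < maxn N K) sp_V (P m) - \sum_(0 <= m < K) sp_V (P m).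
  rewrite (psum_split (fun m => if (m < K)%N then 0 else sp_V (P m)) (leq0n K) (leq_maxr N K)).
  rewrite [X in _ = X - _](psum_split (fun m => sp_V (P m)) (leq0n K) (leq_maxr N K)).
  rewrite big1_seq ?add0r.
    rewrite addrC addKr; apply: eq_big_nat => m /andP[hKm _]; by rewrite ltnNge hKm.
  move=> m /andP[_]; rewrite mem_index_iota => /andP[_ hmK]; by rewrite hmK.
have := pc (maxn N K); rewrite /P2.A0; lra.
Qed.

End Final.


Unset Implicit Arguments.

Theorem corollary5p2 (R : realType) (s0 : R) (SS : set (traj R)) :
  trajectory_set s0 SS ->
  SS !=set0 ->
  (forall S, SS S -> forall j : nat, SS (fun i => S (minn i j))) ->
  LOP SS /\ condK SS.
Proof.
move=> _ [S0 hS0] hst.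
have HstopSS : forall S, SS S -> forall j, SS (stop S j) by move=> S hS j; exact: hst.
split.
  move=> q1 q2 s1 s2 heq; have := heq _ (HstopSS _ hS0 0%N).
  by rewrite !wealth_stop // !wealth0.
move=> f p [Hp hf].
apply: le_ereal_inf_tmp => _ [P [HPpos Hsup] <-].
have Hdom : forall S, SS S ->
  ((Num.max (wealth_inf p S) 0)%:E <= \sum_(0 <= m <oo) (wealth_inf (P m) S)%:E)%E.
  by move=> S hS; rewrite -hf //; exact: Hsup.
have v0 : forall m, 0 <= sp_V (P m) by move=> m; case: (HPpos m) => _ [].
have Cge0 : (0 <= \sum_(0 <= m <oo) (sp_V (P m))%:E)%E.
  by apply: nneseries_ge0 => m _ _; rewrite lee_fin.
move: Cge0.
case Ec : (\sum_(0 <= m <oo) (sp_V (P m))%:E)%E => [c||] Cge0; last by [].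
  2: by rewrite leey.
apply/lee_addgt0Pr => e e0.
have hV : ((sp_V p)%:E <= \sum_(0 <= m <oo) (wealth_inf (P m) (stop S0 0))%:E)%E.
  apply: le_trans (Hdom _ (HstopSS _ hS0 0%N)); rewrite lee_fin le_max.
  by rewrite wealth_stop // wealth0 lexx.
have u0 : forall m, 0 <= wealth_inf (P m) (stop S0 0).
  by move=> m; case: (HPpos m) => _ [_]; apply; exact: HstopSS.
have [K hK] := ser_approx u0 e0 hV.
have eK : \sum_(0 <= m < K) wealth_inf (P m) (stop S0 0) = \sum_(0 <= m < K) sp_V (P m).
  apply: eq_bigr => m _; rewrite wealth_stop ?wealth0 //.
  by case: (HPpos m).
rewrite eK in hK.
have HA0 : 0 <= A0 p P K e by rewrite /A0; lra.
set Qs := Q SS p P K e.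
have hQ : superhedges SS Qs (fun S => (Num.max (- f S) 0)%:E).
  split; first exact: (Q_pos HstopSS Hp HPpos Hdom e0 HA0).
  by move=> S hS; rewrite hf //; exact: (Q_hedge HstopSS Hp HPpos Hdom e0 HA0).
have hI : (Ibar SS (fun S => (Num.max (- f S) 0)%:E) <= (c - sp_V p + e)%:E)%E.
  apply: le_trans (Q_cost HstopSS Hp HPpos Hdom e0 HA0 Ec).
  by apply: ereal_inf_lbound; exists Qs.
apply: le_trans (leeD2l _ hI) _.
by rewrite -EFinD -EFinD lee_fin; lra.
Qed.
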